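(* Let $(G,H,T)$ be a loop folder such that $T$ is invariant under conjugation by $H$. Suppose $t\in T$ is such that $Ht$ is also a left coset of $H$, i.e. there is $g\in G$ with $Ht=gH$ (this holds in particular if $t$ normalizes $H$). Then $[t,H]=1$.
   Context: A loop folder is a triple $(G,H,T)$ with $G$ a finite group, $H\le G$, and $T\subseteq G$ with $1\in T$ such that $T$ is a set of representatives for the right cosets $H^g\backslash G$ for every $g\in G$. *)

(* Defs.v *)
From mathcomp Require Import all_boot all_fingroup.
Set Implicit Arguments. Unset Strict Implicit. Unset Printing Implicit Defensive.
Local Open Scope group_scope.

Definition loop_folder (gT : finGroupType) (G H : {group gT}) (T : {set gT}) :=
  [/\ H \subset G, T \subset G, 1 \in T &
      forall g, g \in G -> is_transversal T (rcosets (H :^ g) G) G].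

(* Main.v *)
Require Import Defs.
From mathcomp Require Import all_boot all_fingroup.
Local Open Scope group_scope.

Theorem lemma3p2 (gT : finGroupType) (G H : {group gT}) (T : {set gT})
  (t : gT) :
  loop_folder G H T ->
  (forall h, h \in H -> T :^ h = T) ->
  t \in T ->
  (exists2 g, g \in G & H :* t = g *: H) ->
  [~: [set t], H] = 1.
Proof.
move=> [sHG sTG T1 Htr] TJ tT [g gG E].
have tG : t \in G by apply: (subsetP sTG).
have gt : g^-1 * t \in H by rewrite -mem_lcoset -E rcoset_refl.
have /and3P [_ _ /forall_inP Hc] := Htr 1 (group1 G).
have Bin : H :* t \in rcosets (H :^ 1) G.
  by rewrite conjsg1 mem_rcosets -(mul1g t) mem_mulg.
have [x Ex] := cards1P (Hc _ Bin).
apply/commG1P; apply/subsetP => y /set1P ->; apply/centP => h hH.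
apply/commgP/conjg_fixP.
have th : t * h \in H :* t by rewrite E mem_lcoset mulgA groupM.
have thT : t ^ h \in T :&: H :* t.
  rewrite inE -{1}(TJ h hH) memJ_conjg tT /= mem_rcoset conjgE.
  rewrite -!mulgA groupM ?groupV //.
  by move: th; rewrite mem_rcoset !mulgA.
have tT' : t \in T :&: H :* t by rewrite inE tT rcoset_refl.
by move: thT tT'; rewrite Ex !inE => /eqP -> /eqP ->.
Qed.
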